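(* Let $E$ be an sc-Banach space and let $V$ be a partial quadrant in a finite-dimensional real vector space. Let $f:\mathcal O(V\oplus E,0)\to (E,0)$ be an $\mathrm{sc}^0$-contraction germ. Then there exists a uniquely determined $\mathrm{sc}^0$-germ $\delta:\mathcal O(V,0)\to (E,0)$ such that the graph germ $\mathrm{gr}(\delta):v\mapsto (v,\delta(v))$ satisfies $f\circ \mathrm{gr}(\delta)=0$, i.e. $f(v,\delta(v))=0$ for all $v$ near $0$.
   Context: An sc-Banach space is a Banach space $E$ together with a nested sequence of Banach spaces $E=E_0\supset E_1\supset E_2\supset\cdots$ such that for $m<n$ the inclusion $E_n\to E_m$ is a compact operator and $E_\infty=\bigcap_m E_m$ is dense in every $E_m$; $\|\cdot\|_m$ is the norm of $E_m$. A finite-dimensional space carries the constant structure $E_m=E$, and direct sums carry the levelwise structure $(E\oplus F)_m=E_m\oplus F_m$. A partial quadrant in a finite-dimensional space $F$ is a set $L([0,\infty)^k\oplus\mathbb R^{n-k})$ for a linear isomorphism $L:\mathbb R^n\to F$. For a closed subset $C$ of an sc-Banach space, $C_m=C\cap E_m$. A germ of neighborhoods $\mathcal O(C,0)$ is a decreasing sequence $U_0\supset U_1\supset\cdots$ where $U_m$ is a relatively open neighborhood of $0$ in $C_m$ (topology of $E_m$); germs are identified when they agree after shrinking these neighborhoods. An $\mathrm{sc}^0$-germ $f:\mathcal O(C,0)\to(F,0)$ into an sc-Banach space $F$ is a continuous map $f:U_0\to F_0$ with $f(0)=0$, $f(U_m)\subset F_m$ and $f:U_m\to F_m$ continuous for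 every $m$. An $\mathrm{sc}^0$-contraction germ is an $\mathrm{sc}^0$-germ $f:\mathcal O(V\oplus E,0)\to(E,0)$ of the form $f(v,u)=u-B(v,u)$ such that for every level $m\ge 0$ and every $0<\varepsilon<1$ one has $\|B(v,u)-B(v,u')\|_m\le\varepsilon\|u-u'\|_m$ for all $(v,u),(v,u')$ in some neighborhood of $(0,0)$ in $V\oplus E_m$ (depending on $m$ and $\varepsilon$). *)

(* Defs.v *)
From HB Require Import structures.
From mathcomp Require Import all_boot all_order all_algebra.
From mathcomp Require Import reals.
Set Implicit Arguments. Unset Strict Implicit. Unset Printing Implicit Defensive.
Import Order.TTheory GRing.Theory Num.Theory.
Local Open Scope ring_scope.

Section SC.
Variable R : realType.

(* A "level structure" on a carrier real vector space X:
   lev m = the subspace X_m (as a subset of X), nrm m = the norm of X_m. *)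
Record scstr (X : lmodType R) := SCStr { lev : nat -> X -> Prop; nrm : nat -> X -> R }.

Definition subspace_on (X : lmodType R) (S : X -> Prop) : Prop :=
  S 0 /\ forall (a : R) x y, S x -> S y -> S (a *: x + y).

Definition norm_on (X : lmodType R) (S : X -> Prop) (N : X -> R) : Prop :=
  (forall x, S x -> 0 <= N x) /\
  (forall x, S x -> N x = 0 -> x = 0) /\
  (forall (a : R) x, S x -> N (a *: x) = `|a| * N x) /\
  (forall x y, S x -> S y -> N (x + y) <= N x + N y).

Definition converges_to (X : lmodType R) (N : X -> R) (u : nat -> X) (x : X) : Prop :=
  forall e : R, 0 < e -> exists K, forall i, (K <= i)%N -> N (u i - x) < e.

Definition complete_on (X : lmodType R) (S : X -> Prop) (N : X -> R) : Prop :=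
  forall u : nat -> X, (forall i, S (u i)) ->
    (forall e : R, 0 < e -> exists K, forall i j, (K <= i)%N -> (K <= j)%N ->
        N (u i - u j) < e) ->
    exists x, S x /\ converges_to N u x.

Definition banach_on (X : lmodType R) (S : X -> Prop) (N : X -> R) : Prop :=
  subspace_on S /\ norm_on S N /\ complete_on S N.

Definition compact_incl (X : lmodType R) (S : scstr X) (n m : nat) : Prop :=
  forall u : nat -> X, (forall i, lev S n (u i)) ->
    (exists M : R, forall i, nrm S n (u i) <= M) ->
    exists phi : nat -> nat, (forall i, (phi i < phi i.+1)%N) /\
      exists x, lev S m x /\ converges_to (nrm S m) (fun i => u (phi i)) x.

Definition is_scBanach (X : lmodType R) (S : scstr X) : Prop :=
  (forall x : X, lev S 0 x) /\
  (forall m, banach_on (lev S m) (nrm S m)) /\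
  (forall m x, lev S m.+1 x -> lev S m x) /\
  (forall m n, (m < n)%N -> compact_incl S n m) /\
  (forall m x, lev S m x -> forall e : R, 0 < e ->
     exists y, (forall k, lev S k y) /\ nrm S m (y - x) < e).

Definition rvnorm (n : nat) (x : 'rV[R]_n) : R := \big[Num.max/0]_(i < n) `|x 0 i|.

Definition const_sc (n : nat) : scstr 'rV[R]_n :=
  @SCStr _ (fun _ _ => True) (fun _ x => rvnorm x).

Definition dsum_sc (X Y : lmodType R) (S : scstr X) (T : scstr Y) : scstr (X * Y)%type :=
  @SCStr _ (fun m p => lev S m p.1 /\ lev T m p.2)
           (fun m p => Num.max (nrm S m p.1) (nrm T m p.2)).

Definition partial_quadrant (n k : nat) (L : 'M[R]_n) : 'rV[R]_n -> Prop :=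
  fun x => exists y : 'rV[R]_n, (forall i : 'I_n, (i < k)%N -> 0 <= y 0 i) /\ x = y *m L.

Definition relopen (X : lmodType R) (S : scstr X) (m : nat) (C U : X -> Prop) : Prop :=
  (forall x, U x -> C x /\ lev S m x) /\
  (forall x, U x -> exists2 e : R, 0 < e &
     forall y, C y -> lev S m y -> nrm S m (y - x) < e -> U y).

Definition germ_nbhd (X : lmodType R) (S : scstr X) (C : X -> Prop) (U : nat -> X -> Prop) : Prop :=
  (forall m, relopen S m C (U m) /\ U m 0) /\ (forall m x, U m.+1 x -> U m x).

Definition cont_on (X Y : lmodType R) (S : scstr X) (T : scstr Y) (m : nat)
    (U : X -> Prop) (f : X -> Y) : Prop :=
  forall x, U x -> forall e : R, 0 < e -> exists2 d : R, 0 < d &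
    forall y, U y -> nrm S m (y - x) < d -> nrm T m (f y - f x) < e.

(* sc^0-germ f : O(C,0) -> (Y,0), represented by its domain sequence U and f on U 0 *)
Definition sc0_germ (X Y : lmodType R) (S : scstr X) (C : X -> Prop) (T : scstr Y)
    (U : nat -> X -> Prop) (f : X -> Y) : Prop :=
  germ_nbhd S C U /\ f 0 = 0 /\
  (forall m, (forall x, U m x -> lev T m (f x)) /\ cont_on S T m (U m) f).

Definition germ_eq (X Y : lmodType R) (S : scstr X) (C : X -> Prop)
    (U : nat -> X -> Prop) (f : X -> Y) (U' : nat -> X -> Prop) (f' : X -> Y) : Prop :=
  exists W : nat -> X -> Prop, germ_nbhd S C W /\
    (forall m x, W m x -> U m x /\ U' m x) /\ (forall x, W 0 x -> f x = f' x).

Definition sc0_contraction_germ (n : nat) (V : 'rV[R]_n -> Prop) (E : lmodType R)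
    (SE : scstr E) (U : nat -> ('rV[R]_n * E)%type -> Prop) (f : ('rV[R]_n * E)%type -> E)
    : Prop :=
  sc0_germ (dsum_sc (const_sc n) SE) (fun p => V p.1) SE U f /\
  exists B : ('rV[R]_n * E)%type -> E,
    (forall p, U 0 p -> f p = p.2 - B p) /\
    forall (m : nat) (eps : R), 0 < eps -> eps < 1 ->
      exists2 r : R, 0 < r &
        forall v u u', V v -> U m (v, u) -> U m (v, u') ->
          rvnorm v < r -> nrm SE m u < r -> nrm SE m u' < r ->
          nrm SE m (B (v, u) - B (v, u')) <= eps * nrm SE m (u - u').

Definition graph_solves (n : nat) (V : 'rV[R]_n -> Prop) (E : lmodType R)
    (U : nat -> ('rV[R]_n * E)%type -> Prop) (f : ('rV[R]_n * E)%type -> E)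
    (W : nat -> 'rV[R]_n -> Prop) (delta : 'rV[R]_n -> E) : Prop :=
  exists N : 'rV[R]_n -> Prop, relopen (const_sc n) 0 V N /\ N 0 /\
    forall v, N v -> W 0 v /\ U 0 (v, delta v) /\ f (v, delta v) = 0.

End SC.

(* Main.v *)
Require Import Defs.
From HB Require Import structures.
From mathcomp Require Import all_boot all_order all_algebra.
From mathcomp Require Import reals boolp.
From mathcomp Require Import ring lra.
Import Order.TTheory GRing.Theory Num.Theory.
Local Open Scope ring_scope.
Set Implicit Arguments. Unset Strict Implicit.

Lemma subS0 (R : realType) (X : lmodType R) (S : X -> Prop) : subspace_on S -> S 0.
Proof. by case. Qed.
Lemma subSD (R : realType) (X : lmodType R) (S : X -> Prop) x y :
  subspace_on S -> S x -> S y -> S (x + y).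
Proof. by case=> _ H Sx Sy; have := H 1 x y Sx Sy; rewrite scale1r. Qed.
Lemma subSZ (R : realType) (X : lmodType R) (S : X -> Prop) (a : R) x :
  subspace_on S -> S x -> S (a *: x).
Proof. by case=> S0 H Sx; have := H a x 0 Sx S0; rewrite addr0. Qed.
Lemma subSN (R : realType) (X : lmodType R) (S : X -> Prop) x :
  subspace_on S -> S x -> S (- x).
Proof. by move=> hS Sx; have := subSZ (-1) hS Sx; rewrite scaleN1r. Qed.
Lemma subSB (R : realType) (X : lmodType R) (S : X -> Prop) x y :
  subspace_on S -> S x -> S y -> S (x - y).
Proof. by move=> hS Sx Sy; apply: subSD => //; apply: subSN. Qed.

Lemma normZ0 (R : realType) (X : lmodType R) (S : X -> Prop) (N : X -> R) :
  subspace_on S -> norm_on S N -> N 0 = 0.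
Proof.
move=> hS [_ [_ [hZ _]]]; have := hZ 0 0 (subS0 hS).
by rewrite scale0r normr0 mul0r.
Qed.
Lemma normN (R : realType) (X : lmodType R) (S : X -> Prop) (N : X -> R) x :
  norm_on S N -> S x -> N (- x) = N x.
Proof.
move=> [_ [_ [hZ _]]] Sx; have := hZ (-1) x Sx.
by rewrite scaleN1r normrN normr1 mul1r.
Qed.
Lemma normB (R : realType) (X : lmodType R) (S : X -> Prop) (N : X -> R) x y :
  subspace_on S -> norm_on S N -> S x -> S y -> N (x - y) = N (y - x).
Proof.
move=> hS hN Sx Sy; rewrite -(normN hN (subSB hS Sy Sx)).
by rewrite opprB.
Qed.
Lemma normD (R : realType) (X : lmodType R) (S : X -> Prop) (N : X -> R) x y :
  norm_on S N -> S x -> S y -> N (x + y) <= N x + N y.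
Proof. by move=> [_ [_ [_ h]]]; apply: h. Qed.
Lemma normge0 (R : realType) (X : lmodType R) (S : X -> Prop) (N : X -> R) x :
  norm_on S N -> S x -> 0 <= N x.
Proof. by move=> [h _]; apply: h. Qed.
Lemma normeq0 (R : realType) (X : lmodType R) (S : X -> Prop) (N : X -> R) x :
  norm_on S N -> S x -> N x = 0 -> x = 0.
Proof. by move=> [_ [h _]]; apply: h. Qed.

Lemma le0_small (R : realType) (y : R) : (forall e, 0 < e -> y < e) -> y <= 0.
Proof.
move=> H; rewrite leNgt; apply/negP => hy.
by have := H y hy; rewrite ltxx.
Qed.

Lemma pow2_ge (R : realType) (i : nat) : (i%:R : R) <= 2 ^+ i.
Proof.
have -> : (2 : R) ^+ i = (2 ^ i)%N%:R by rewrite natrX.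
by rewrite ler_nat ltnW // ltn_expl.
Qed.

Lemma fixpt (R : realType) (X : lmodType R) (S : X -> Prop) (N : X -> R)
  (T : X -> X) (r : R) :
  banach_on S N -> 0 < r ->
  (forall u, S u -> N u < r -> S (T u)) ->
  (forall u u', S u -> S u' -> N u < r -> N u' < r ->
     N (T u - T u') <= 2^-1 * N (u - u')) ->
  N (T 0) < r / 4 ->
  exists x, S x /\ N x < r /\ T x = x.
Proof.
move=> [hS [hN hC]] r0 hT hK ha.
have S0 := subS0 hS; have N0 := normZ0 hS hN.
set a := N (T 0) in ha.
have Sa : S (T 0) by apply: hT; rewrite ?N0.
have a0 : 0 <= a by apply: (normge0 hN).
pose u k := iter k T 0.
have inv : forall k, S (u k) /\ N (u k) <= 2 * a.
  elim=> [|k [Sk Nk]] /=; first by rewrite /u /= N0; split => //; lra.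
  have Nkr : N (u k) < r by lra.
  split; first exact: hT.
  change (N (T (u k)) <= 2 * a).
  have -> : T (u k) = (T (u k) - T 0) + T 0 by rewrite subrK.
  apply: le_trans (normD hN (subSB hS (hT _ Sk Nkr) Sa) Sa) _.
  have := hK _ _ Sk S0 Nkr; rewrite N0 subr0 -/a => /(_ r0) h; lra.
have Sk j : S (u j) by case: (inv j).
have Nk j : N (u j) < r by case: (inv j) => _ h; lra.
pose b k := a / 2 ^+ k.
have b0 j : 0 <= b j by rewrite /b divr_ge0 // exprn_ge0.
have bS j : b j.+1 * 2 = b j.
  rewrite /b exprS; field; by rewrite expf_neq0 // pnatr_eq0.
have uS j : u j.+1 = T (u j) by [].
have dif : forall k, N (u k.+1 - u k) <= b k.
  elim=> [|k IH].
    by rewrite /b /u /= subr0 expr0 divr1.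
  change (N (T (u k.+1) - T (u k)) <= b k.+1).
  apply: le_trans (hK _ _ (Sk _) (Sk _) (Nk _) (Nk _)) _.
  have := bS k; lra.
have cau : forall i d, N (u (i + d)%N - u i) <= 2 * b i - 2 * b (i + d)%N.
  move=> i; elim=> [|d IH]; first by rewrite addn0 subrr N0; lra.
  have -> : u (i + d.+1)%N - u i = (u (i + d).+1 - u (i + d)%N) + (u (i + d)%N - u i).
    by rewrite addnS addrA subrK.
  apply: le_trans (normD hN (subSB hS (Sk _) (Sk _)) (subSB hS (Sk _) (Sk _))) _.
  have := dif (i + d)%N; have := bS (i + d)%N; rewrite addnS; lra.
have small : forall e, 0 < e -> exists K, forall i, (K <= i)%N -> 2 * b i < e.
  move=> e e0; exists (Num.Def.archi_bound (2 * a / e)) => i hi.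
  have hb := archi_boundP (divr_ge0 (mulr_ge0 (ler0n _ 2) a0) (ltW e0)).
  have : (Num.Def.archi_bound (2 * a / e))%:R <= (i%:R : R) by rewrite ler_nat.
  have := pow2_ge R i; move=> h1 h2.
  have h3 : 2 * a / e < 2 ^+ i by lra.
  have p0 : (0 : R) < 2 ^+ i by rewrite exprn_gt0.
  rewrite /b mulrA ltr_pdivrMr //.
  have -> : 2 * a = (2 * a / e) * e by field; rewrite gt_eqF.
  by rewrite mulrC ltr_pM2l.
have cauchy : forall e, 0 < e -> exists K, forall i j, (K <= i)%N -> (K <= j)%N ->
    N (u i - u j) < e.
  move=> e e0; case: (small e e0) => K hK'; exists K => i j hi hj.
  case: (leqP i j) => hij.
    rewrite (normB hS hN (Sk _) (Sk _)) -(subnKC hij).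
    have := cau i (j - i)%N; have := hK' i hi; have := b0 (i + (j - i))%N; lra.
  rewrite -(subnKC (ltnW hij)).
  have := cau j (i - j)%N; have := hK' j hj; have := b0 (j + (i - j))%N; lra.
case: (hC u Sk cauchy) => x [Sx cx].
have Nx : N x < r.
  have e0 : 0 < r - 2 * a by lra.
  case: (cx _ e0) => K hK'; have hc := hK' K (leqnn K).
  have h := normD hN (subSB hS Sx (Sk K)) (Sk K); rewrite subrK in h.
  rewrite (normB hS hN Sx (Sk K)) in h.
  case: (inv K) => _ h'; lra.
exists x; split => //; split => //.
have STx : S (T x) by apply: hT.
apply/eqP; rewrite -subr_eq0; apply/eqP; apply: (normeq0 hN (subSB hS STx Sx)).
apply/le_anti; rewrite (normge0 hN (subSB hS STx Sx)) andbT.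
apply: le0_small => e e0.
have e2 : 0 < e / 2 by lra.
case: (cx _ e2) => K hK'.
have -> : T x - x = (T x - T (u K)) + (u K.+1 - x) by rewrite uS addrA subrK.
apply: le_lt_trans (normD hN (subSB hS STx (hT _ (Sk _) (Nk _))) (subSB hS (Sk _) Sx)) _.
have h1 := hK _ _ Sx (Sk K) Nx (Nk K).
have h2 := hK' K (leqnn K); have h3 := hK' K.+1 (leqnSn K).
rewrite (normB hS hN Sx (Sk _)) in h1.
have := normge0 hN (subSB hS (Sk K) Sx); lra.
Qed.

Lemma incr_ge (phi : nat -> nat) : (forall i, (phi i < phi i.+1)%N) -> forall i, (i <= phi i)%N.
Proof. by move=> h; elim=> // i IH; apply: leq_ltn_trans IH (h i). Qed.

Lemma norm_cmp (R : realType) (X : lmodType R) (SE : scstr X) m :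
  is_scBanach SE ->
  exists2 C : R, 0 < C & forall x, lev SE m x -> nrm SE 0 x <= C * nrm SE m x.
Proof.
move=> [hall [hban [hdec [hcomp _]]]].
case: m => [|m]; first by exists 1 => // x _; rewrite mul1r.
case: (pselect (exists2 C : R, 0 < C & forall x, lev SE m.+1 x -> nrm SE 0 x <= C * nrm SE m.+1 x)) => // hno.
have [hSm [hNm _]] := hban m.+1.
have [hS0 [hN0 _]] := hban 0%N.
have ex : forall i : nat, exists x, lev SE m.+1 x /\ nrm SE m.+1 x = 1 /\
    (i.+1%:R : R) < nrm SE 0 x.
  move=> i; case: (pselect (exists x, lev SE m.+1 x /\ nrm SE m.+1 x = 1 /\
    (i.+1%:R : R) < nrm SE 0 x)) => // hn; exfalso; apply: hno.
  exists i.+1%:R => // x hx.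
  case: (pselect (nrm SE m.+1 x = 0)) => hx0.
    have x0 := normeq0 hNm hx hx0; rewrite hx0 x0 (normZ0 hS0 hN0) mulr0 //.
  have t0 : 0 < nrm SE m.+1 x.
    by rewrite lt0r (normge0 hNm hx) andbT; apply/eqP.
  have hy : lev SE m.+1 ((nrm SE m.+1 x)^-1 *: x) by apply: subSZ.
  have [_ [_ [hZm _]]] := hNm; have [_ [_ [hZ0 _]]] := hN0.
  have ny : nrm SE m.+1 ((nrm SE m.+1 x)^-1 *: x) = 1.
    by rewrite hZm // ger0_norm ?invr_ge0 ?ltW // mulVf // gt_eqF.
  have : ~ ((i.+1%:R : R) < nrm SE 0 ((nrm SE m.+1 x)^-1 *: x)).
    by move=> h; apply: hn; exists ((nrm SE m.+1 x)^-1 *: x).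
  move=> hnot.
  have : nrm SE 0 ((nrm SE m.+1 x)^-1 *: x) <= i.+1%:R.
    by case: leP => // hlt; exfalso; exact: hnot hlt.
  rewrite hZ0 ?hall // ger0_norm; last by rewrite invr_ge0 ltW.
  by rewrite mulrC ler_pdivrMr.
case: (choice ex) => u hu.
have lu i : lev SE m.+1 (u i) by case: (hu i).
case: (hcomp 0%N m.+1 (ltn0Sn m) u lu) => [|phi [hphi [x [hx cx]]]].
  by exists 1 => i; case: (hu i) => _ [-> _].
case: (cx 1 ltr01) => K hK.
have x0 : 0 <= nrm SE 0 x by apply: (normge0 hN0).
pose M := Num.Def.archi_bound (nrm SE 0 x).
have hM := archi_boundP x0.
pose i := maxn K M.
have h1 := hK i (leq_maxl K M).
have h2 := normD hN0 (hall (u (phi i) - x)) (hall x); rewrite subrK in h2.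
case: (hu (phi i)) => _ [_ h3].
have : (M%:R : R) <= (phi i)%:R.
  rewrite ler_nat; apply: leq_trans (leq_maxr K M) (incr_ge hphi i).
move=> h4; have h5 : ((phi i).+1%:R : R) = (phi i)%:R + 1 by rewrite -natr1.
lra.
Qed.

Lemma Um0 (T : Type) (U : nat -> T -> Prop) :
  (forall m x, U m.+1 x -> U m x) -> forall m x, U m x -> U 0%N x.
Proof. by move=> h; elim=> // m IH x /h /IH. Qed.

Lemma level_data (R : realType) (E : lmodType R) (SE : scstr E) (n : nat)
    (V : 'rV[R]_n -> Prop) (U : nat -> ('rV[R]_n * E)%type -> Prop)
    (f B : ('rV[R]_n * E)%type -> E) (m : nat) (r0 : R) :
  is_scBanach SE ->
  sc0_germ (dsum_sc (const_sc R n) SE) (fun p => V p.1) SE U f ->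
  (forall p, U 0%N p -> f p = p.2 - B p) ->
  (forall (m : nat) (eps : R), 0 < eps -> eps < 1 ->
      exists2 r : R, 0 < r &
        forall v u u', V v -> U m (v, u) -> U m (v, u') ->
          rvnorm v < r -> nrm SE m u < r -> nrm SE m u' < r ->
          nrm SE m (B (v, u) - B (v, u')) <= eps * nrm SE m (u - u')) ->
  0 < r0 ->
  exists r rho : R, 0 < r /\ 0 < rho /\
  (forall v u, V v -> rvnorm v < rho -> lev SE m u -> nrm SE m u < r -> U m (v, u)) /\
  (forall v u u', V v -> rvnorm v < rho -> lev SE m u -> lev SE m u' ->
     nrm SE m u < r -> nrm SE m u' < r ->
     nrm SE m (B (v, u) - B (v, u')) <= 2^-1 * nrm SE m (u - u')) /\
  (forall v, V v -> rvnorm v < rho -> nrm SE m (B (v, 0)) < r / 4) /\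
  (forall x, lev SE m x -> nrm SE m x < r -> nrm SE 0 x < r0).
Proof.
move=> hSE [[hrel hdecU] [hf0 hfm]] hBf hBc r00.
have [hall [hban _]] := hSE.
have [hSm [hNm _]] := hban m.
have [[_ hop] hU0] := hrel m.
case: (hop 0 hU0) => e1 e10 he1.
have h2a : (0:R) < 2^-1 by lra.
have h2b : (2^-1 : R) < 1 by lra.
case: (hBc m 2^-1 h2a h2b) => r2 r20 hr2.
case: (norm_cmp m hSE) => C C0 hC.
pose r := Num.min e1 (Num.min r2 (r0 / C)).
have r0p : 0 < r by rewrite /r !lt_min e10 r20 divr_gt0.
have r4 : 0 < r / 4 by lra.
case: ((hfm m).2 0 hU0 _ r4) => d d0 hd.
pose rho := Num.min e1 (Num.min r2 d).
have rhop : 0 < rho by rewrite /rho !lt_min e10 r20 d0.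
have hA : forall v u, V v -> rvnorm v < rho -> lev SE m u -> nrm SE m u < r -> U m (v, u).
  move=> v u Vv hv lu hu; apply: he1 => //=.
  rewrite subr0 /= gt_max.
  rewrite subr0; move: hv hu; rewrite /rho /r !lt_min => /and3P [h1 _ _] /and3P [h2 _ _].
  by rewrite h1 h2.
exists r, rho; split => //; split => //; split => //; split.
  move=> v u u' Vv hv lu lu' hu hu'.
  apply: hr2 => //; try exact: hA.
  - by move: hv; rewrite /rho !lt_min => /and3P [].
  - by move: hu; rewrite /r !lt_min => /and3P [].
  - by move: hu'; rewrite /r !lt_min => /and3P [].
split.
  move=> v Vv hv.
  have N0 := normZ0 hSm hNm.
  have hU : U m (v, 0) by apply: hA v 0 Vv hv (subS0 hSm) _; rewrite N0.
  have lf := (hfm m).1 _ hU.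
  have -> : B (v, 0) = - f (v, 0) by rewrite (hBf _ (Um0 hdecU hU)) /= opprB subr0.
  rewrite (normN hNm lf).
  have := hd (v, 0) hU; rewrite hf0 !subr0 /= N0; apply.
  rewrite gt_max d0 andbT.
  by move: hv; rewrite /rho !lt_min => /and3P [].
move=> x lx hx.
apply: le_lt_trans (hC x lx) _.
move: hx; rewrite /r !lt_min => /and3P [_ _].
by rewrite ltr_pdivlMr // mulrC.
Qed.

Lemma rvnorm_ge0 (R : realType) n (x : 'rV[R]_n) : 0 <= rvnorm x.
Proof. exact: bigmax_ge_id. Qed.
Lemma rvnorm_le (R : realType) n (x : 'rV[R]_n) i : `|x 0 i| <= rvnorm x.
Proof. exact: le_bigmax. Qed.
Lemma rvnormD (R : realType) n (x y : 'rV[R]_n) : rvnorm (x + y) <= rvnorm x + rvnorm y.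
Proof.
apply: bigmax_le; first by rewrite addr_ge0 // rvnorm_ge0.
move=> i _; rewrite mxE; apply: le_trans (ler_normD _ _) _.
by rewrite lerD // rvnorm_le.
Qed.
Lemma rvnorm0 (R : realType) n : rvnorm (0 : 'rV[R]_n) = 0.
Proof.
apply/le_anti; rewrite rvnorm_ge0 andbT; apply: bigmax_le => // i _.
by rewrite mxE normr0.
Qed.

Lemma relopen_ball (R : realType) n m (V : 'rV[R]_n -> Prop) (c : R) :
  relopen (const_sc R n) m V (fun v => V v /\ rvnorm v < c).
Proof.
split; first by move=> x [].
move=> x [Vx hx]; exists (c - rvnorm x); first by rewrite subr_gt0.
move=> y Vy _ /= hy; split => //.
have := rvnormD (y - x) x; rewrite subrK => h; lra.
Qed.

Lemma relopen_I (R : realType) (X : lmodType R) (S : scstr X) m (C P Q : X -> Prop) :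
  relopen S m C P -> relopen S m C Q -> relopen S m C (fun x => P x /\ Q x).
Proof.
move=> [hP1 hP2] [hQ1 hQ2]; split; first by move=> x [/hP1].
move=> x [Px Qx]; case: (hP2 x Px) => e1 e10 h1; case: (hQ2 x Qx) => e2 e20 h2.
exists (Num.min e1 e2); first by rewrite lt_min e10 e20.
move=> y Cy ly; rewrite lt_min => /andP [y1 y2]; split; [exact: h1|exact: h2].
Qed.

Fixpoint rhos (R : realType) (g : nat -> R) (b : R) (m : nat) : R :=
  match m with 0%N => Num.min b (g 0%N) | m'.+1 => Num.min (rhos g b m') (g m) end.

Lemma rhos_gt0 (R : realType) (g : nat -> R) b : 0 < b -> (forall m, 0 < g m) ->
  forall m, 0 < rhos g b m.
Proof. by move=> b0 g0; elim=> [|m IH] /=; rewrite lt_min ?b0 ?IH g0. Qed.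
Lemma rhos_le_g (R : realType) (g : nat -> R) b m : rhos g b m <= g m.
Proof. by case: m => [|m] /=; rewrite ge_min lexx orbT. Qed.
Lemma rhos_dec (R : realType) (g : nat -> R) b m : rhos g b m.+1 <= rhos g b m.
Proof. by rewrite /= ge_min lexx. Qed.
Lemma rhos_le_b (R : realType) (g : nat -> R) b m : rhos g b m <= b.
Proof.
elim: m => [|m IH] /=; first by rewrite ge_min lexx.
exact: le_trans (rhos_dec g b m) IH.
Qed.

Definition LD (R : realType) (E : lmodType R) (SE : scstr E) (n : nat)
    (V : 'rV[R]_n -> Prop) (U : nat -> ('rV[R]_n * E)%type -> Prop)
    (B : ('rV[R]_n * E)%type -> E) (m : nat) (r0 r rho : R) : Prop :=
  0 < r /\ 0 < rho /\
  (forall v u, V v -> rvnorm v < rho -> lev SE m u -> nrm SE m u < r -> U m (v, u)) /\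
  (forall v u u', V v -> rvnorm v < rho -> lev SE m u -> lev SE m u' ->
     nrm SE m u < r -> nrm SE m u' < r ->
     nrm SE m (B (v, u) - B (v, u')) <= 2^-1 * nrm SE m (u - u')) /\
  (forall v, V v -> rvnorm v < rho -> nrm SE m (B (v, 0)) < r / 4) /\
  (forall x, lev SE m x -> nrm SE m x < r -> nrm SE 0 x < r0).

Lemma level_data' (R : realType) (E : lmodType R) (SE : scstr E) (n : nat)
    (V : 'rV[R]_n -> Prop) (U : nat -> ('rV[R]_n * E)%type -> Prop)
    (f B : ('rV[R]_n * E)%type -> E) (r0 : R) :
  is_scBanach SE ->
  sc0_germ (dsum_sc (const_sc R n) SE) (fun p => V p.1) SE U f ->
  (forall p, U 0%N p -> f p = p.2 - B p) ->
  (forall (m : nat) (eps : R), 0 < eps -> eps < 1 ->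
      exists2 r : R, 0 < r &
        forall v u u', V v -> U m (v, u) -> U m (v, u') ->
          rvnorm v < r -> nrm SE m u < r -> nrm SE m u' < r ->
          nrm SE m (B (v, u) - B (v, u')) <= eps * nrm SE m (u - u')) ->
  0 < r0 ->
  forall m, exists p : R * R, LD SE V U B m r0 p.1 p.2.
Proof.
move=> h1 h2 h3 h4 h5 m.
case: (level_data m h1 h2 h3 h4 h5) => r [rho H]; by exists (r, rho).
Qed.
Unset Implicit Arguments. Set Strict Implicit.

Theorem theorem2p2 (R : realType) (E : lmodType R) (SE : scstr E)
    (n k : nat) (L : 'M[R]_n)
    (U : nat -> ('rV[R]_n * E)%type -> Prop) (f : ('rV[R]_n * E)%type -> E) :
  is_scBanach SE ->
  (k <= n)%N -> L \in unitmx ->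
  sc0_contraction_germ (partial_quadrant k L) SE U f ->
  exists (W : nat -> 'rV[R]_n -> Prop) (delta : 'rV[R]_n -> E),
    sc0_germ (const_sc R n) (partial_quadrant k L) SE W delta /\
    graph_solves (partial_quadrant k L) U f W delta /\
    forall (W' : nat -> 'rV[R]_n -> Prop) (delta' : 'rV[R]_n -> E),
      sc0_germ (const_sc R n) (partial_quadrant k L) SE W' delta' ->
      graph_solves (partial_quadrant k L) U f W' delta' ->
      germ_eq (const_sc R n) (partial_quadrant k L) W delta W' delta'.
Proof.
move=> hSE _ _ [hgerm [B [hBf hBc]]].
set V := partial_quadrant k L.
have V0 : V 0.
  exists 0; split; last by rewrite mul0mx.
  by move=> i _; rewrite mxE.
have hgerm' := hgerm; case: hgerm' => [[hrel hdecU] [hf0 hfm]].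
have [hall [hban _]] := hSE.
have [hS0 [hN0 _]] := hban 0%N.
have N00 := normZ0 hS0 hN0.
case: (level_data' (r0 := 1) hSE hgerm hBf hBc ltr01 0%N) => [[rr rhor]] /=.
move=> [rr0 [rhor0 [hAr [hBr [hCr _]]]]].
case: (choice (level_data' (r0 := rr) hSE hgerm hBf hBc rr0)) => g hg.
pose P v x := nrm SE 0 x < rr /\ U 0%N (v, x) /\ B (v, x) = x.
have uniq : forall v x y, V v -> rvnorm v < rhor -> nrm SE 0 x < rr -> nrm SE 0 y < rr ->
    B (v, x) = x -> B (v, y) = y -> x = y.
  move=> v x y Vv hv hx hy Bx By.
  have h := hBr v x y Vv hv (hall x) (hall y) hx hy; rewrite Bx By in h.
  apply/eqP; rewrite -subr_eq0; apply/eqP.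
  apply: (normeq0 hN0 (hall _)); apply/le_anti.
  rewrite (normge0 hN0 (hall _)) andbT; lra.
have ex : forall v, exists x, V v -> rvnorm v < rhor -> P v x.
  move=> v; case: (pselect (V v /\ rvnorm v < rhor)) => [[Vv hv]|hno]; last first.
    by exists 0 => Vv hv; exfalso; apply: hno.
  have [x [_ [hx Bx]]] : exists x, lev SE 0 x /\ nrm SE 0 x < rr /\ B (v, x) = x.
    apply: (fixpt (T := fun u => B (v, u)) (hban 0%N) rr0).
    - by move=> u _ _; apply: hall.
    - by move=> u u' lu lu' hu hu'; apply: hBr.
    - exact: hCr.
  exists x => _ _; split => //; split => //; exact: hAr.
case: (choice ex) => delta hdelta.
pose rho := rhos (fun m => (g m).2) rhor.
have rho0 : forall m, 0 < rho m.
  by apply: rhos_gt0 => // m; case: (hg m) => _ [].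
have rhob m : rho m <= rhor by apply: rhos_le_b.
have rhog m : rho m <= (g m).2 by apply: (rhos_le_g (fun m => (g m).2)).
pose W m v := V v /\ rvnorm v < rho m.
have WP : forall m v, W m v -> P v (delta v).
  move=> m v [Vv hv]; apply: hdelta => //; exact: lt_le_trans hv (rhob m).
have Wlev : forall m v, W m v -> lev SE m (delta v) /\ nrm SE m (delta v) < (g m).1.
  move=> m v Wv; have [Vv hv] := Wv.
  have hv' : rvnorm v < (g m).2 by exact: lt_le_trans hv (rhog m).
  case: (hg m) => r0 [rho0' [hA [hB [hC hD]]]].
  have [hSm [hNm _]] := hban m.
  have [x [lx [hx Bx]]] : exists x, lev SE m x /\ nrm SE m x < (g m).1 /\ B (v, x) = x.
    apply: (fixpt (T := fun u => B (v, u)) (hban m) r0).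
    - move=> u lu hu; have hU := hA v u Vv hv' lu hu.
      rewrite (_ : B (v, u) = u - f (v, u)); first exact: subSB hSm lu ((hfm m).1 _ hU).
      by rewrite (hBf _ (Um0 hdecU hU)) /= opprB addrC subrK.
    - by move=> u u' lu lu' hu hu'; apply: hB.
    - exact: hC.
  have [h1 [_ h3]] := WP m v Wv.
  have -> : delta v = x.
    apply: (uniq v) => //; first exact: lt_le_trans hv (rhob m).
    exact: hD.
  by [].
have delta0 : delta 0 = 0.
  have W00 : W 0%N 0 by split => //; rewrite rvnorm0.
  have [h1 [_ h3]] := WP 0%N 0 W00.
  apply: (uniq 0) => //; first by rewrite rvnorm0.
  - by rewrite N00.
  - have := hBf _ (hrel 0%N).2; rewrite hf0 /= => /eqP; rewrite eq_sym subr_eq0 => /eqP <-.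
    by [].
have Wrel : forall m, relopen (const_sc R n) m V (W m) by move=> m; apply: relopen_ball.
exists W, delta; split; last split.
- split; last split => //.
    split; first by move=> m; split => //; split => //; rewrite rvnorm0.
    by move=> m x [Vx hx]; split => //; exact: lt_le_trans hx (rhos_dec _ _ m).
  move=> m; split; first by move=> x /Wlev [].
  move=> x Wx e e0.
  have [lx nx] := Wlev m x Wx.
  have [Vx hx] := Wx.
  have hx' : rvnorm x < (g m).2 by exact: lt_le_trans hx (rhog m).
  case: (hg m) => r0 [rho0' [hA [hB [hC hD]]]].
  have [hSm [hNm _]] := hban m.
  have hUx := hA x (delta x) Vx hx' lx nx.
  have e2 : 0 < e / 2 by lra.
  case: ((hfm m).2 _ hUx _ e2) => d d0 hd.
  exists d => // y Wy hy.
  have [ly ny] := Wlev m y Wy.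
  have [Vy hyr] := Wy.
  have hy' : rvnorm y < (g m).2 by exact: lt_le_trans hyr (rhog m).
  have hUyx := hA y (delta x) Vy hy' lx nx.
  have hf := hd (y, delta x) hUyx.
  move: hf; rewrite /= subrr (normZ0 hSm hNm) => hf.
  have {}hf := hf (ltac:(by rewrite gt_max hy d0)).
  have [_ [_ By]] := WP m y Wy.
  have [_ [_ Bx]] := WP m x Wx.
  have fx0 : f (x, delta x) = 0.
    by rewrite (hBf _ (Um0 hdecU hUx)) /= Bx subrr.
  have Byx : B (y, delta x) = delta x - f (y, delta x).
    by rewrite (hBf _ (Um0 hdecU hUyx)) /= opprB addrC subrK.
  have lf1 := (hfm m).1 _ hUyx.
  have lf2 := (hfm m).1 _ hUx.
  have lBy : lev SE m (B (y, delta x)) by rewrite Byx; exact: subSB.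
  have eq : delta y - delta x =
      (B (y, delta y) - B (y, delta x)) + (f (x, delta x) - f (y, delta x)).
    by rewrite By Byx fx0 sub0r opprB [f _ - _]addrC addrA addrK.
  have hc := hB y (delta y) (delta x) Vy hy' ly lx ny nx.
  have lBy' : lev SE m (B (y, delta y)) by rewrite By.
  have ht := normD hNm (subSB hSm lBy' lBy) (subSB hSm lf2 lf1).
  rewrite -eq in ht.
  rewrite (normB hSm hNm lf2 lf1) in ht.
  lra.
- exists (W 0%N); split; first exact: Wrel.
  split; first by split => //; rewrite rvnorm0.
  move=> v Wv; have [h1 [h2 h3]] := WP 0%N v Wv.
  split => //; split => //.
  by rewrite (hBf _ h2) /= h3 subrr.
move=> W' delta' [[hrel' hdec'] [hd0' hdm']] [N' [hN'rel [hN'0 hN']]].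
case: ((hdm' 0%N).2 0 (hrel' 0%N).2 rr rr0) => d d0 hd.
exists (fun m v => (W m v /\ W' m v) /\ (N' v /\ V v /\ rvnorm v < d)).
split; last split.
- split.
    move=> m; split.
      apply: relopen_I; first apply: relopen_I.
      + exact: Wrel.
      + exact: (hrel' m).1.
      apply: relopen_I; first exact: hN'rel.
      exact: relopen_ball.
    split; first split.
    + by split => //; rewrite rvnorm0.
    + exact: (hrel' m).2.
    by split => //; split => //; rewrite rvnorm0.
  move=> m x [[[Vx hx] W'x] hN]; split => //; split.
    by split => //; exact: lt_le_trans hx (rhos_dec _ _ m).
  exact: hdec'.
- by move=> m x [[h1 h2] _].
move=> x [[Wx W'x] [N'x [Vx hx]]].
have [h1 [_ h3]] := WP 0%N x Wx.
have [_ [hU' hf']] := hN' x N'x.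
apply: (uniq x) => //.
- by case: Wx => _ h; exact: lt_le_trans h (rhob 0%N).
- by have := hd x W'x; rewrite !subr0 hd0' subr0; apply.
- move: hf'; rewrite (hBf _ hU') /= => /eqP; rewrite subr_eq0 => /eqP <-.
  by [].
Qed.
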